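(* Let $X\sim\mathbb P_X$ on $\mathcal X$, $\mathcal Y$ finite, $r:\mathcal X\to\mathbb R^{\mathcal Y}$ and $g:\mathcal X\to\mathbb R^K$. Suppose that for every $a\in\mathbb R^{\mathcal Y}\setminus\{0\}$ and every $b\in\mathbb R^K$, $\Pr\big(a^\top r(X)+b^\top g(X)=0\big)=0$ (i.e., the push-forward of $\mathbb P_X$ under $x\mapsto(r(x),g(x))\in\mathbb R^{\mathcal Y\times K}$ gives no mass to any strict linear subspace with a nonzero component in the $\mathbb R^{\mathcal Y}$ coordinates). Then for every $w:\mathcal Y\times[K]\to\mathbb R$, the set $\operatorname{argmin}_{y\in\mathcal Y}\big(r(X)_y-\sum_{k\in[K]}g(X)_k w(y,k)\big)$ has exactly one element $\mathbb P_X$-almost surely. *)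

(* Defs.v *)
From HB Require Import structures.
From mathcomp Require Import all_boot all_order all_algebra.
From mathcomp Require Import all_classical all_reals all_analysis.
Set Implicit Arguments. Unset Strict Implicit. Unset Printing Implicit Defensive.
Import Order.TTheory GRing.Theory Num.Theory.
Local Open Scope ring_scope.

Definition score (T : Type) (R : realType) (Y : finType) (K : nat)
  (r : T -> Y -> R) (g : T -> 'I_K -> R) (w : Y -> 'I_K -> R) (x : T) (y : Y) : R :=
  r x y - \sum_(k < K) g x k * w y k.

Definition argmin_set (T : Type) (R : realType) (Y : finType) (K : nat)
  (r : T -> Y -> R) (g : T -> 'I_K -> R) (w : Y -> 'I_K -> R) (x : T) : {set Y} :=
  [set y : Y | [forall y' : Y, score r g w x y <= score r g w x y']].

(* Main.v *)
Require Import Defs.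
From HB Require Import structures.
From mathcomp Require Import all_boot all_order all_algebra.
From mathcomp Require Import all_classical all_reals all_analysis.
From mathcomp Require Import ring lra.
Import Order.TTheory GRing.Theory Num.Theory.
Local Open Scope ring_scope.
Local Open Scope classical_set_scope.

Theorem lemma1 (d : measure_display) (T : measurableType d) (R : realType)
  (P : probability T R) (Y : finType) (K : nat)
  (r : T -> Y -> R) (g : T -> 'I_K -> R)
  (hY : (0 < #|Y|)%N)
  (mr : forall y : Y, measurable_fun setT (fun x => r x y))
  (mg : forall k : 'I_K, measurable_fun setT (fun x => g x k))
  (hgen : forall (a : Y -> R) (b : 'I_K -> R), (exists y, a y != 0) ->
     P [set x | \sum_(y : Y) a y * r x y + \sum_(k < K) b k * g x k = 0] = 0%E) :
  forall w : Y -> 'I_K -> R,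
    {ae P, forall x, #|argmin_set r g w x| = 1%N}.
Proof.
move=> w.
pose N (p : Y * Y) := [set x | score r g w x p.1 = score r g w x p.2].
have hN : forall p : Y * Y, p.1 != p.2 -> P.-negligible (N p).
  case=> y y' /= hyy'.
  pose a z : R := if z == y then 1 else if z == y' then -1 else 0.
  pose b k : R := w y' k - w y k.
  pose f x := \sum_(z : Y) a z * r x z + \sum_(k < K) b k * g x k.
  have mf : measurable_fun setT f.
    apply: measurable_realfun.measurable_funD; apply: measurable_sum => i;
      apply: measurable_realfun.measurable_funM => //; exact: measurable_cst.
  have mS : measurable [set x | f x = 0].
    have := mf measurableT [set 0] (measurable_set1 0).
    by rewrite setTI.
  exists [set x | f x = 0]; split => //.
    apply: hgen; exists y; rewrite /a eqxx; exact: oner_neq0.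
  move=> x; rewrite /N /= /score /f => E.
  have hy'y : (y' == y) = false by apply/negbTE; rewrite eq_sym.
  rewrite (bigD1 y) //= (bigD1 y') //=; last by rewrite hy'y.
  rewrite big1; last first.
    by move=> z /andP[zy zy']; rewrite /a (negbTE zy) (negbTE zy') mul0r.
  rewrite /a eqxx hy'y eqxx.
  rewrite /b.
  have -> : \sum_(k < K) (w y' k - w y k) * g x k =
     \sum_(k < K) g x k * w y' k - \sum_(k < K) g x k * w y k.
    rewrite -sumrB; apply: eq_bigr => k _; ring.
  move: E; set A := \sum_(k < K) g x k * w y k; set B := \sum_(k < K) g x k * w y' k.
  move=> E; rewrite addr0; lra.
pose M := \big[setU/set0]_(p : Y * Y | p.1 != p.2) N p.
have hM : P.-negligible M.
  rewrite /M; apply: (big_ind (fun S => P.-negligible S)) => //.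
  - exact: negligible_set0.
  - exact: negligibleU.
apply: negligibleS hM => x /= Hx.
apply: contrapT => HM; apply: Hx.
have uniq : forall y y', score r g w x y = score r g w x y' -> y = y'.
  move=> y y' E; apply/eqP/negPn/negP => hyy'; apply: HM.
  rewrite /M -bigcup_seq_cond; exists (y, y') => //=.
  by rewrite mem_index_enum hyy'.
have [y0 _] : exists y0 : Y, true.
  by move: hY => /card_gt0P [y0 _]; exists y0.
have [ym _ Hm] := arg_minP (score r g w x) (isT : xpredT y0).
suff -> : argmin_set r g w x = [set ym]%SET by rewrite cards1.
apply/setP => z; rewrite !inE; apply/forallP/eqP => [Hz|->].
  apply: uniq; apply/eqP; rewrite eq_le Hm //= andbT.
  exact: Hz.
by move=> y'; apply: Hm.
Qed.
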